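(* Let $(x,y)$ be an $\mathbf{x}$-vertex of $R$ and let $x'$ be a vertex of $P_A$ adjacent to $x$ in $P_A$. Then the step from $x$ to $x'$ lifts to $R$ (i.e., there exists $y'$ with $(x',y')\in R$ and $\operatorname{supp}(y')=\operatorname{supp}(y)$) if and only if $ax'\in\operatorname{Band}_{\mathbf{x}}(y)$.
   Context: Let $A\in\mathbb{R}^{m_1\times n_1}$, nonzero $a\in\mathbb{R}^{1\times n_1}$, nonzero $b\in\mathbb{R}^{1\times n_2}$, $B\in\mathbb{R}^{m_2\times n_2}$, $c_A\in\mathbb{R}^{m_1}$, $c_B\in\mathbb{R}^{m_2}$, $c_a,c_b\in\mathbb{R}$, and $R=\{(x,y)\in\mathbb{R}^{n_1}\times\mathbb{R}^{n_2}: Ax=c_A,\ ax+by=c_a+c_b,\ By=c_B,\ x,y\ge 0\}$. Assume $R$ is simple (nondegenerate). Let $P_A=\{x: Ax=c_A, x\ge 0\}$ and $Q_B=\{y: By=c_B, y\ge 0\}$. A vertex $(x,y)$ of $R$ is an $\mathbf{x}$-vertex if $x$ is a vertex of $P_A$. For such a vertex, $\operatorname{Band}_{\mathbf{x}}(y):=\{c_a+c_b-bz : Bz=c_B,\ \operatorname{supp}(z)\subseteq\operatorname{supp}(y),\ z\ge 0\}\subseteq\mathbb{R}$, where $\operatorname{supp}$ denotes the set of indices of nonzero coordinates. *)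

(* Defs.v *)
From HB Require Import structures.
From mathcomp Require Import all_boot all_order all_algebra.
Set Implicit Arguments. Unset Strict Implicit. Unset Printing Implicit Defensive.
Import Order.TTheory GRing.Theory Num.Theory.
Local Open Scope ring_scope.

Section Poly.
Variable R : realFieldType.

Definition stdpoly (m n : nat) (M : 'M[R]_(m, n)) (c : 'cV[R]_m) (z : 'cV[R]_n) : Prop :=
  M *m z = c /\ forall i, 0 <= z i 0.

Definition supp (n : nat) (z : 'cV[R]_n) : {set 'I_n} := [set i | z i 0 != 0].

Definition is_vertex (n : nat) (P : 'cV[R]_n -> Prop) (v : 'cV[R]_n) : Prop :=
  P v /\ forall y z t, P y -> P z -> 0 < t < 1 ->
    v = t *: y + (1 - t) *: z -> y = z.

Definition segment (n : nat) (u v : 'cV[R]_n) (w : 'cV[R]_n) : Prop :=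
  exists s, 0 <= s <= 1 /\ w = s *: u + (1 - s) *: v.

(* u, v adjacent vertices of P: distinct vertices whose segment is a face (edge) of P *)
Definition adjacent (n : nat) (P : 'cV[R]_n -> Prop) (u v : 'cV[R]_n) : Prop :=
  is_vertex P u /\ is_vertex P v /\ u <> v /\
  forall y z t, P y -> P z -> 0 < t < 1 ->
    segment u v (t *: y + (1 - t) *: z) -> segment u v y /\ segment u v z.

Definition simple_stdpoly (m n : nat) (M : 'M[R]_(m, n)) (c : 'cV[R]_m) : Prop :=
  forall v, is_vertex (stdpoly M c) v -> #|supp v| = \rank M.

(* constraint matrix and right-hand side of R, variables (x;y) = col_mx x y *)
Definition Rmat m1 n1 m2 n2 (A : 'M[R]_(m1, n1)) (a : 'rV[R]_n1) (b : 'rV[R]_n2)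
  (B : 'M[R]_(m2, n2)) : 'M[R]_(m1 + (1 + m2), n1 + n2) :=
  col_mx (row_mx A 0) (col_mx (row_mx a b) (row_mx 0 B)).

Definition Rrhs m1 m2 (cA : 'cV[R]_m1) (cB : 'cV[R]_m2) (ca cb : R)
  : 'cV[R]_(m1 + (1 + m2)) :=
  col_mx cA (col_mx (const_mx (ca + cb)) cB).

Definition Band m2 n2 (B : 'M[R]_(m2, n2)) (b : 'rV[R]_n2) (cB : 'cV[R]_m2)
  (ca cb : R) (y : 'cV[R]_n2) (r : R) : Prop :=
  exists z : 'cV[R]_n2, B *m z = cB /\ supp z \subset supp y /\
    (forall i, 0 <= z i 0) /\ r = ca + cb - (b *m z) 0 0.

End Poly.

(* Main.v *)
Require Import Defs.
From HB Require Import structures.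
From mathcomp Require Import all_boot all_order all_algebra.
From mathcomp Require Import ring lra zify.
Set Implicit Arguments. Unset Strict Implicit. Unset Printing Implicit Defensive.
Import Order.TTheory GRing.Theory Num.Theory.
Local Open Scope ring_scope.

Lemma perturb (R : realFieldType) m n (M : 'M[R]_(m,n)) c v d :
  stdpoly M c v -> M *m d = 0 -> (forall i, v i 0 = 0 -> d i 0 = 0) ->
  exists2 eps : R, 0 < eps & stdpoly M c (v + eps *: d) /\ stdpoly M c (v - eps *: d).
Proof.
move=> [hMv hv] hMd hz.
pose t i := if v i 0 == 0 then 0 else `|d i 0| / v i 0.
have t0 : forall i, 0 <= t i.
  by move=> i; rewrite /t; case: eqP => // _; apply: divr_ge0 (normr_ge0 _) (hv i).
pose s := \sum_i t i.
have s0 : 0 <= s by apply: sumr_ge0 => i _.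
have ts : forall i, t i <= s.
  by move=> i; rewrite /s (bigD1 i) //= lerDl sumr_ge0.
have s1 : 0 < 1 + s by lra.
have key : forall i, `|(1 + s)^-1 * d i 0| <= v i 0.
  move=> i; case: (eqVneq (v i 0) 0) => h.
    by rewrite hz // mulr0 normr0 h.
  have vp : 0 < v i 0 by rewrite lt0r h hv.
  have := ts i; rewrite /t (negbTE h) ler_pdivrMr // => hd.
  rewrite normrM normfV (gtr0_norm s1) mulrC ler_pdivrMr //.
  nra.
exists (1 + s)^-1; first by rewrite invr_gt0.
have hM : forall k : R, M *m (v + k *: d) = c.
  by move=> k; rewrite mulmxDr -scalemxAr hMd scaler0 addr0.
split; split.
- exact: hM.
- move=> i; rewrite !mxE; have := key i; rewrite ler_norml => /andP[h1 h2]; lra.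
- by rewrite -scaleNr hM.
- move=> i; rewrite !mxE; have := key i; rewrite ler_norml => /andP[h1 h2]; lra.
Qed.

Lemma vertex_ker (R : realFieldType) m n (M : 'M[R]_(m,n)) c v :
  is_vertex (stdpoly M c) v ->
  forall d : 'cV_n, M *m d = 0 -> (forall i, v i 0 = 0 -> d i 0 = 0) -> d = 0.
Proof.
move=> [hv hext] d hMd hz.
have [eps he [h1 h2]] := perturb hv hMd hz.
have h : 0 < (1/2 : R) < 1 by apply/andP; split; lra.
have := hext _ _ (1/2 : R) h1 h2.
move/(_ h) => H.
have : (v + eps *: d) = (v - eps *: d).
  apply: H; apply/matrixP => i j; rewrite !mxE; lra.
move=> E; apply/matrixP => i j; have := congr1 (fun A : 'M_(n,1) => A i j) E; rewrite !mxE => e.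
have : eps * d i j = 0 by lra.
move/eqP; rewrite mulf_eq0 => /orP[/eqP e0|/eqP //]; lra.
Qed.

Lemma ker_vertex (R : realFieldType) m n (M : 'M[R]_(m,n)) c v :
  stdpoly M c v ->
  (forall d : 'cV_n, M *m d = 0 -> (forall i, v i 0 = 0 -> d i 0 = 0) -> d = 0) ->
  is_vertex (stdpoly M c) v.
Proof.
move=> hv H; split => // y z t [hMy hy] [hMz hz] /andP[t0 t1] hvt.
apply/eqP; rewrite -subr_eq0; apply/eqP; apply: H.
  by rewrite mulmxBr hMy hMz subrr.
move=> i hi; have := congr1 (fun A : 'M_(n,1) => A i 0) hvt; rewrite !mxE hi => e.
have a1 := hy i; have a2 := hz i.
have : 0 <= t * y i 0 by apply: mulr_ge0 => //; lra.
have : 0 <= (1 - t) * z i 0 by apply: mulr_ge0 => //; lra.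
move=> b1 b2.
have ey : t * y i 0 = 0 by lra.
have ez : (1 - t) * z i 0 = 0 by lra.
move: ey ez => /eqP; rewrite mulf_eq0 => /orP[/eqP|/eqP ->]; first lra.
move/eqP; rewrite mulf_eq0 => /orP[/eqP|/eqP ->]; first lra.
by rewrite subrr.
Qed.

Lemma mulRmat (R : realFieldType) m1 n1 m2 n2 (A : 'M[R]_(m1, n1)) (a : 'rV[R]_n1)
  (b : 'rV[R]_n2) (B : 'M[R]_(m2, n2)) (u : 'cV[R]_n1) (w : 'cV[R]_n2) :
  Rmat A a b B *m col_mx u w = col_mx (A *m u) (col_mx (a *m u + b *m w) (B *m w)).
Proof. by rewrite /Rmat !mul_col_mx !mul_row_col !mul0mx addr0 add0r. Qed.

Lemma kerR (R : realFieldType) m1 n1 m2 n2 (A : 'M[R]_(m1, n1)) (a : 'rV[R]_n1)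
  (b : 'rV[R]_n2) (B : 'M[R]_(m2, n2)) (u : 'cV[R]_n1) (w : 'cV[R]_n2) :
  Rmat A a b B *m col_mx u w = 0 -> [/\ A *m u = 0, a *m u + b *m w = 0 & B *m w = 0].
Proof.
rewrite mulRmat -[0 : 'M_(_,1)]col_mx0 -[0 : 'M_(1 + m2,1)]col_mx0.
by case/eq_col_mx => -> /eq_col_mx [-> ->].
Qed.

Lemma col_pos (R : realFieldType) n1 n2 (u : 'cV[R]_n1) (w : 'cV[R]_n2) (P : R -> Prop) :
  (forall i, P (col_mx u w i 0)) <-> (forall i, P (u i 0)) /\ (forall i, P (w i 0)).
Proof.
split.
  move=> h; split => i; [have := h (lshift n2 i); rewrite col_mxEu
                        | have := h (rshift n1 i); rewrite col_mxEd]; by [].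
case=> h1 h2 i; rewrite -(splitK i); case: (split i) => j /=;
  by [rewrite col_mxEu | rewrite col_mxEd].
Qed.

Lemma col_zpat (R : realFieldType) n1 n2 (u : 'cV[R]_n1) (w : 'cV[R]_n2) (u' : 'cV[R]_n1) (w' : 'cV[R]_n2) :
  (forall i, col_mx u w i 0 = 0 -> col_mx u' w' i 0 = 0) <->
  (forall i, u i 0 = 0 -> u' i 0 = 0) /\ (forall i, w i 0 = 0 -> w' i 0 = 0).
Proof.
split.
  move=> h; split => i; [have := h (lshift n2 i); rewrite !col_mxEu
                        | have := h (rshift n1 i); rewrite !col_mxEd]; by [].
case=> h1 h2 i; rewrite -(splitK i); case: (split i) => j /=;
  [rewrite !col_mxEu; exact: h1 | rewrite !col_mxEd; exact: h2].
Qed.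

Lemma stdR (R : realFieldType) m1 n1 m2 n2 (A : 'M[R]_(m1, n1)) (a : 'rV[R]_n1)
  (b : 'rV[R]_n2) (B : 'M[R]_(m2, n2)) cA cB ca cb (u : 'cV[R]_n1) (w : 'cV[R]_n2) :
  stdpoly (Rmat A a b B) (Rrhs cA cB ca cb) (col_mx u w) <->
  [/\ A *m u = cA, a *m u + b *m w = const_mx (ca + cb), B *m w = cB,
      (forall i, 0 <= u i 0) & (forall i, 0 <= w i 0)].
Proof.
have cp := @col_pos _ _ _ u w (fun r => 0 <= r).
rewrite /stdpoly mulRmat /Rrhs; split.
  by case=> /eq_col_mx [h1 /eq_col_mx [h2 h3]] /cp [h4 h5].
by case=> h1 h2 h3 h4 h5; rewrite h1 h2 h3; split => //; apply/cp.
Qed.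

Lemma card_supp_sum (R : realFieldType) n (v : 'cV[R]_n) :
  #|supp v| = (\sum_(i < n) (v i 0 != 0)%R)%N.
Proof.
rewrite -sum1_card big_mkcond /=; apply: eq_bigr => i _; rewrite inE.
by case: (_ != 0).
Qed.

Lemma card_supp_col (R : realFieldType) n1 n2 (u : 'cV[R]_n1) (w : 'cV[R]_n2) :
  #|supp (col_mx u w)| = (#|supp u| + #|supp w|)%N.
Proof.
rewrite !card_supp_sum big_split_ord /=.
by congr (_ + _)%N; apply: eq_bigr => i _; rewrite ?col_mxEu ?col_mxEd.
Qed.

Lemma rank_bound (R : fieldType) p n (M : 'M[R]_(p,n)) (J : {set 'I_n}) (e : 'cV[R]_n) :
 (forall d : 'cV_n, M *m d = 0 -> (forall i, i \notin J -> d i 0 = 0) -> exists l, d = l *: e) ->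
 (#|J| <= \rank M + 1)%N.
Proof.
move=> H.
pose f : 'I_#|J| -> 'I_n := fun j => enum_val j.
have finj : injective f by apply: enum_val_inj.
have fJ : forall j, f j \in J by move=> j; apply: enum_valP.
pose S : 'M[R]_(n, #|J|) := \matrix_(i, j) ((i == f j)%:R).
have StS : S^T *m S = 1%:M.
  apply/matrixP => j j'; rewrite !mxE (bigD1 (f j)) //= big1 ?addr0.
    by rewrite !mxE eqxx mul1r (inj_eq finj).
  by move=> i /negbTE hi; rewrite !mxE hi mul0r.
have ker : (kermx (M *m S)^T <= (S^T *m e)^T)%MS.
  apply/row_subP => i; set u := row i _.
  have hu0 : u *m (M *m S)^T = 0 by rewrite /u -row_mul mulmx_ker row0.
  have hu : M *m (S *m u^T) = 0.
    by rewrite mulmxA -[M *m S]trmxK -trmx_mul hu0 trmx0.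
  have hz : forall k, k \notin J -> (S *m u^T) k 0 = 0.
    move=> k kJ; rewrite !mxE big1 // => j _; rewrite !mxE.
    case: eqP => [hk|]; last by rewrite mul0r.
    by move: kJ; rewrite hk fJ.
  have [l hl] := H _ hu hz.
  have : u^T = l *: (S^T *m e).
    by rewrite scalemxAr -hl mulmxA StS mul1mx.
  move/(congr1 trmx); rewrite trmxK => ->.
  by rewrite linearZ /= scalemx_sub.
have := mxrankS ker; rewrite mxrank_ker mxrank_tr => h.
have h1 := rank_leq_row (S^T *m e)^T.
have h2 := mxrankM_maxl M S.
have : (#|J| - \rank (M *m S) <= 1)%N by apply: leq_trans h h1.
rewrite leq_subLR => h3.
apply: leq_trans h3 _; rewrite addnC.
by rewrite addnC leq_add2r.
Qed.

Lemma adj_lemma (R : realFieldType) m n (A : 'M[R]_(m,n)) cA (x x' α : 'cV[R]_n) :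
  adjacent (stdpoly A cA) x x' -> A *m α = 0 ->
  (forall i, (x + x') i 0 = 0 -> α i 0 = 0) -> exists l, α = l *: (x - x').
Proof.
case=> [[hx _] [[hx' _] [_ hseg]]] hα hz.
have [hAx hx0] := hx; have [hAx' hx'0] := hx'.
pose mm := (1/2 : R) *: x + (1 - 1/2) *: x'.
have hm : stdpoly A cA mm.
  split; first by rewrite mulmxDr -!scalemxAr hAx hAx' -scalerDl addrC subrK scale1r.
  move=> i; rewrite !mxE; have := hx0 i; have := hx'0 i; lra.
have hzm : forall i, mm i 0 = 0 -> α i 0 = 0.
  move=> i; rewrite !mxE => h; apply: hz; rewrite !mxE.
  have := hx0 i; have := hx'0 i; lra.
have [eps he [h1 h2]] := perturb hm hα hzm.
have hhalf : 0 < (1/2 : R) < 1 by apply/andP; split; lra.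
have hs : segment x x' ((1/2) *: (mm + eps *: α) + (1 - 1/2) *: (mm - eps *: α)).
  exists (1/2); split; first by apply/andP; split; lra.
  apply/matrixP => i j; rewrite !mxE.
by field.
have [[s [_ hs']] _] := hseg _ _ _ h1 h2 hhalf hs.
exists ((s - 1/2) / eps).
apply/matrixP => i j; have := congr1 (fun M : 'M_(n,1) => M i j) hs'; rewrite !mxE => e.
have e' : eps * α i j = s * x i j + (1 - s) * x' i j - (1/2 * x i j + (1 - 1/2) * x' i j).
  by rewrite -e; ring.
have epsn : eps != 0 by rewrite gt_eqF.
apply: (mulfI epsn); rewrite e'; field.
by [].  
Qed.

Theorem lemma1 (R : realFieldType) (m1 n1 m2 n2 : nat)
  (A : 'M[R]_(m1, n1)) (a : 'rV[R]_n1) (b : 'rV[R]_n2) (B : 'M[R]_(m2, n2))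
  (cA : 'cV[R]_m1) (cB : 'cV[R]_m2) (ca cb : R)
  (ha : a != 0) (hb : b != 0)
  (hsimple : simple_stdpoly (Rmat A a b B) (Rrhs cA cB ca cb))
  (x x' : 'cV[R]_n1) (y : 'cV[R]_n2)
  (hvR : is_vertex (stdpoly (Rmat A a b B) (Rrhs cA cB ca cb)) (col_mx x y))
  (hvx : is_vertex (stdpoly A cA) x)
  (hadj : adjacent (stdpoly A cA) x x') :
  (exists y' : 'cV[R]_n2,
      stdpoly (Rmat A a b B) (Rrhs cA cB ca cb) (col_mx x' y') /\ supp y' = supp y)
  <-> Band B b cB ca cb y ((a *m x') 0 0).
Proof.
split.
  case=> y' [/stdR [h1 h2 h3 h4 h5] hs]; exists y'.
  split => //; split; first by rewrite hs subxx.
  split => //.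
  have := congr1 (fun M : 'M_1 => M 0 0) h2; rewrite /= !mxE => e.
  rewrite -e; set u := \sum_(j < n1) _; set v := \sum_(j < n2) _.
  by rewrite /u /v; lra.
case=> z [hBz [hsub [hz0 hval]]].
have hx'v : is_vertex (stdpoly A cA) x' by case: hadj => _ [].
have [[hAx hx0] _] := hvx.
have [[hAx' hx'0] _] := hx'v.
have [/stdR [_ hay hBy _ hy0] _] := hvR.
have haz : a *m x' + b *m z = const_mx (ca + cb).
  apply/matrixP => i j; rewrite !ord1 [LHS]mxE [RHS]mxE hval; lra.
have hRz : stdpoly (Rmat A a b B) (Rrhs cA cB ca cb) (col_mx x' z) by apply/stdR.
exists z; split => //.
have hsub' : forall i, y i 0 = 0 -> z i 0 = 0.
  move=> i hi; apply/eqP; apply: contraT => hz.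
  have : i \in supp z by rewrite inE.
  by move/(subsetP hsub); rewrite inE hi eqxx.
have kery : forall be : 'cV_n2, b *m be = 0 -> B *m be = 0 ->
    (forall i, y i 0 = 0 -> be i 0 = 0) -> be = 0.
  move=> be h1 h2 h3.
  have := vertex_ker hvR (d := col_mx 0 be).
  rewrite mulRmat !mulmx0 add0r h1 h2 !col_mx0 => /(_ erefl).
  have hp : forall i, col_mx x y i 0 = 0 -> col_mx (0 : 'cV_n1) be i 0 = 0.
    by apply/col_zpat; split => // i _; rewrite mxE.
  move/(_ hp) => E.
  by have := congr1 dsubmx E; rewrite col_mxKd => ->; apply/matrixP => i j; rewrite !mxE.
have E1 := hsimple _ hvR; rewrite card_supp_col in E1.
have hvz : is_vertex (stdpoly (Rmat A a b B) (Rrhs cA cB ca cb)) (col_mx x' z).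
  apply: ker_vertex hRz _ => d.
  rewrite -[d]vsubmxK; set al := usubmx d; set be := dsubmx d.
  move=> /kerR [hA hab hB] /col_zpat [zal zbe].
  have al0 : al = 0 := vertex_ker hx'v hA zal.
  have be0 : be = 0.
    apply: kery => //; last by move=> i hi; apply: zbe; apply: hsub'.
    by rewrite -hab al0 mulmx0 add0r.
  by rewrite al0 be0 col_mx0.
have E2 := hsimple _ hvz; rewrite card_supp_col in E2.
have E3 : (#|supp (col_mx (x + x') y)| <= \rank (Rmat A a b B) + 1)%N.
  apply: (rank_bound (e := col_mx (x - x') (y - z))) => d.
  rewrite -[d]vsubmxK; set al := usubmx d; set be := dsubmx d.
  move=> /kerR [hA hab hB] hz'.
  have : forall i, col_mx (x + x') y i 0 = 0 -> col_mx al be i 0 = 0.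
    by move=> i hi; apply: hz'; rewrite inE hi eqxx.
  case/col_zpat => zal zbe.
  have [l hl] := adj_lemma hadj hA zal.
  exists l.
  have hby : b *m y = const_mx (ca + cb) - a *m x by rewrite -hay addrAC subrr add0r.
  have hbz : b *m z = const_mx (ca + cb) - a *m x' by rewrite -haz addrAC subrr add0r.
  have hbb : b *m be = - (a *m al).
    by apply/eqP; rewrite -addr_eq0 addrC hab.
  have : be - l *: (y - z) = 0.
    apply: kery.
    - rewrite mulmxBr -scalemxAr mulmxBr hby hbz hbb hl -scalemxAr mulmxBr.
      by apply/matrixP => i j; rewrite !mxE; ring.
    - by rewrite mulmxBr -scalemxAr mulmxBr hB hBy hBz subrr scaler0 subrr.
    - move=> i hi; have h1 := zbe i hi; have h2 := hsub' i hi.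
      rewrite /be !mxE in h1 *; rewrite h1 h2 hi; ring.
  move/eqP; rewrite subr_eq0 => /eqP hbe.
  by rewrite hl hbe scale_col_mx.
rewrite card_supp_col in E3.
have [i0 [hi0 hi0']] : exists i0, x i0 0 != 0 /\ x' i0 0 = 0.
  case: (boolP [exists i, (x i 0 != 0) && (x' i 0 == 0)]).
    by case/existsP => i /andP [h1 /eqP h2]; exists i.
  rewrite negb_exists => /forallP hn.
  have : x - x' = 0.
    apply: (vertex_ker hx'v); first by rewrite mulmxBr hAx hAx' subrr.
    move=> i hi; have := hn i; rewrite hi eqxx andbT negbK => /eqP h.
    by rewrite !mxE h hi subrr.
  move/eqP; rewrite subr_eq0 => /eqP exx.
  by case: hadj => _ [_ [/(_ exx)]].
have sub1 : supp x' \subset supp (x + x') :\ i0.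
  apply/subsetP => i; rewrite !inE => hi; apply/andP; split.
    by apply: contraNneq hi => ->; rewrite hi0'.
  rewrite mxE; have h1 := hx0 i; have h2 := hx'0 i.
  have hp : 0 < x' i 0 by rewrite lt0r hi h2.
  by rewrite gt_eqF // ltr_wpDl.
have C1 := subset_leq_card sub1.
have C2 := cardsD1 i0 (supp (x + x')).
have hin : i0 \in supp (x + x').
  rewrite inE mxE; have := hx0 i0; have := hx'0 i0; rewrite hi0' addr0 => _ _ //.
rewrite hin in C2.
rewrite add1n in C2.
have C3 : (#|supp y| <= #|supp z|)%N.
move: E1 E2 E3 C1 C2.
set r := \rank _; set k1 := #|supp x|; set k2 := #|supp y|; set k3 := #|supp x'|; set k4 := #|supp z|; set k5 := #|supp (x + x')|; set k6 := #|_ :\ i0|.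
move=> E1 E2 E3 C1 C2.
clearbody r k1 k2 k3 k4 k5 k6.
lia.

by apply/eqP; rewrite eqEcard hsub C3.
Qed.
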